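(* Let $n\geq 3$ be an odd integer. Then $n$ is composite or $n\equiv 1\pmod 4$ if and only if there exists an integer $d$ such that both $d$ and $-d$ are quadratic nonresidues modulo $n$.
   Context: An integer $d$ is a quadratic residue modulo $n$ if $d\not\equiv 0 \pmod n$ and $d\equiv x^2\pmod n$ for some integer $x$; it is a quadratic nonresidue modulo $n$ if $d\not\equiv x^2 \pmod n$ for every integer $x$. *)

(* Defs.v *)
From mathcomp Require Import all_boot all_order all_algebra.
Set Implicit Arguments. Unset Strict Implicit. Unset Printing Implicit Defensive.
Import Order.TTheory GRing.Theory Num.Theory.
Local Open Scope ring_scope.

Definition quad_nonresidue (d : int) (n : nat) : Prop :=
  forall x : int, (d != x ^+ 2 %[mod n%:Z])%Z.

Definition composite (n : nat) : Prop := (1 < n)%N /\ ~~ prime n.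

(* Main.v *)
Require Import Defs.
From mathcomp Require Import all_boot all_order all_algebra all_field.
From mathcomp Require Import zify ring.
Import GRing.Theory Num.Theory.
Local Open Scope ring_scope.

Section PrimeField.
Variable p : nat.
Hypothesis pp : prime p.
Hypothesis p2 : p != 2%N.
Local Notation F := 'F_p.

Lemma two_neq0 : (2%:R : F) != 0.
Proof.
rewrite -(dvdn_pcharf (pchar_Fp pp)).
apply/negP => /(dvdn_leq (isT : (0 < 2)%N)) => h.
have := prime_gt1 pp. move: p2 h; lia.
Qed.

Lemma x_eq_negx (x : F) : x = - x -> x = 0.
Proof.
move=> h; apply/eqP; have : x *+ 2 == 0 by rewrite mulr2n {1}h addNr.
by rewrite -mulr_natr mulf_eq0 (negPf two_neq0) orbF.
Qed.

Lemma exists_nonsq : exists r : F, forall x : F, r != x ^+ 2.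
Proof.
case: (boolP [exists r : F, [forall x : F, r != x ^+ 2]]).
  by case/existsP => r /forallP H; exists r.
rewrite negb_exists => /forallP H.
have inj : {in predT &, injective (fun x : F => x ^+ 2)}.
  apply/image_injP; rewrite eqn_leq leq_image_card /=.
  apply: subset_leq_card; apply/subsetP => y _.
  move: (H y); rewrite negb_forall => /existsP [x]; rewrite negbK => /eqP ->.
  exact: image_f.
have := inj 1 (-1) isT isT; rewrite sqrrN => /(_ erefl) h.
have := x_eq_negx _ h => /eqP; by rewrite oner_eq0.
Qed.


Lemma no_sqrt_m1 : (p %% 4 = 3)%N -> forall i : F, i ^+ 2 != -1.
Proof.
move=> p3 i; apply/eqP => hi.
have hp : p = (4 * (p %/ 4) + 3)%N by lia.
have : i ^+ (2 * (2 * (p %/ 4) + 1) + 1) = i.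
  have := expf_card i; rewrite card_Fp //.
  by rewrite (_ : (2 * (2 * (p %/ 4) + 1) + 1 = p)%N) //; lia.
rewrite exprD exprM hi exprD exprM sqrrN !expr1n mul1r !expr1 mulN1r.
move=> /esym /x_eq_negx => h0.
by move: hi; rewrite h0 expr0n /= => /eqP; rewrite eq_sym oppr_eq0 oner_eq0.
Qed.

Lemma prod_top (m : nat) : (m < p)%N ->
  \prod_(p - m <= k < p) (k%:R : F) = (-1) ^+ m * \prod_(1 <= k < m.+1) (k%:R : F).
Proof.
elim: m => [|m IH] hm.
  by rewrite subn0 big_geq // big_geq // mulr1.
rewrite big_ltn; last by lia.
rewrite (_ : ((p - m.+1).+1 = p - m)%N); last by lia.
rewrite IH; last by lia.
rewrite [in RHS]big_nat_recr //= exprS.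
have -> : ((p - m.+1)%:R : F) = - (m.+1)%:R.
  apply/eqP; rewrite -subr_eq0 opprK -natrD (_ : (p - m.+1 + m.+1 = p)%N); last by lia.
  by rewrite pchar_Fp_0.
ring.
Qed.

Lemma sqrt_m1 : (p %% 4 = 1)%N -> exists i : F, i ^+ 2 = -1.
Proof.
move=> p1; set h := (p.-1./2)%N.
have hp : p = (h + h).+1 by rewrite /h; lia.
exists (h`!)%:R.
have W : ((p.-1)`!)%:R = (-1 : F).
  have D : (p %| (p.-1)`!.+1)%N by rewrite -Wilson ?prime_gt1.
  by move: D; rewrite (dvdn_pcharf (pchar_Fp pp)) -natr1 addr_eq0 => /eqP.
have Eh : (-1) ^+ h = 1 :> F.
  by rewrite (_ : h = 2 * (p %/ 4))%N ?exprM ?sqrrN ?expr1n //; rewrite /h; lia.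
rewrite -W [in RHS]fact_prod [in RHS]natr_prod (_ : (p.-1.+1 = p)%N); last by lia.
rewrite (big_cat_nat (n := h.+1)) /=; [|lia|lia].
have T := prod_top h; rewrite (_ : (p - h)%N = h.+1) in T; last by lia.
by rewrite T; [rewrite Eh mul1r fact_prod natr_prod expr2 | lia].
Qed.

Lemma natF0 k : (k < p)%N -> (k%:R : F) = 0 -> k = 0%N.
Proof.
move=> kp /eqP; rewrite -(dvdn_pcharf (pchar_Fp pp)) => D.
case: k kp D => // k kp D; have := dvdn_leq (isT : (0 < k.+1)%N) D; by rewrite leqNgt kp.
Qed.

Lemma natF_inj k j : (k < p)%N -> (j < p)%N -> (k%:R : F) = j%:R -> k = j.
Proof.
wlog kj : k j / (k <= j)%N.
  move=> W kp jp E; case: (leqP k j) => c; first exact: W.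
  by apply/esym/W => //; apply: ltnW.
move=> kp jp E; have : ((j - k)%:R : F) = 0.
  by rewrite natrB // E subrr.
move/natF0 => H. have H2 : (j - k < p)%N by lia. move: (H H2) => /eqP; rewrite subn_eq0 => jk; apply/eqP; by rewrite eqn_leq kj jk.
Qed.

Lemma sq_cover : (p %% 4 = 3)%N ->
  forall a : F, (exists x : F, a = x ^+ 2) \/ (exists x : F, a = - x ^+ 2).
Proof.
move=> p3 a; set h := (p.-1./2)%N.
have hp : p = (h + h).+1 by rewrite /h; lia.
pose f1 (k : 'I_h.+1) : F := (k%:R) ^+ 2.
pose f2 (k : 'I_h.+1) : F := - (k%:R) ^+ 2.
have key : forall k j : 'I_h.+1, (k%:R : F) ^+ 2 = (j%:R) ^+ 2 -> k = j.
  move=> k j /eqP; rewrite eqf_sqr => /orP [/eqP E | /eqP E].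
    apply: val_inj; apply: natF_inj => //.
      by apply: leq_trans (ltn_ord k) _; rewrite hp; lia.
    by apply: leq_trans (ltn_ord j) _; rewrite hp; lia.
  have : ((k + j)%N%:R : F) = 0 by rewrite natrD E addNr.
  move/natF0 => H.
  have Hk := ltn_ord k; have Hj := ltn_ord j.
  have : (k + j < p)%N by rewrite hp; lia.
  move/H => H0; apply: val_inj => /=; lia.
have i1 : injective f1 by move=> k j; apply: key.
have i2 : injective f2 by move=> k j /oppr_inj; apply: key.
set S1 := [set f1 k | k in 'I_h.+1]; set S2 := [set f2 k | k in 'I_h.+1].
have c1 : #|S1| = h.+1 by rewrite card_imset // card_ord.
have c2 : #|S2| = h.+1 by rewrite card_imset // card_ord.
have cI : (#|S1 :&: S2| <= 1)%N.
  rewrite -(cards1 (0 : F)); apply: subset_leq_card; apply/subsetP => b.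
  move=> /setIP [/imsetP [k _ ->] /imsetP [j _ E]]; rewrite inE; rewrite /f1 /f2 in E *.
  case: (eqVneq (j%:R : F) 0) => [j0 | j0].
    by move: E; rewrite j0 expr0n /= oppr0 => ->.
  have : ((k%:R / j%:R : F) ^+ 2 == -1).
    rewrite expr_div_n E mulNr divff ?expf_neq0 //.
  by rewrite (negPf (no_sqrt_m1 p3 _)).
have cU : (#|[set: F]| <= #|S1 :|: S2|)%N.
  rewrite cardsT card_Fp //; have := cardsUI S1 S2; rewrite c1 c2; lia.
have : S1 :|: S2 = [set: F].
  by apply/eqP; rewrite eqEcard subsetT cU.
move/setP/(_ a); rewrite !inE => /orP [/imsetP [k _ ->] | /imsetP [k _ ->]].
  by left; exists k%:R.
by right; exists k%:R.
Qed.

End PrimeField.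
Arguments exists_nonsq {p}.
Arguments sqrt_m1 {p}.
Arguments sq_cover {p}.

Lemma eqmodF {p} (pp : prime p) (a b : int) :
  (a == b %[mod p])%Z = (a%:~R == b%:~R :> 'F_p).
Proof.
by rewrite eqz_mod_dvd (dvdz_pcharf (pchar_Fp pp)) rmorphB /= subr_eq0.
Qed.

Lemma nonresF {p} (pp : prime p) (d : int) :
  quad_nonresidue d p <-> forall y : 'F_p, d%:~R != y ^+ 2.
Proof.
split.
  move=> H y; have := H (val y)%:Z; rewrite (eqmodF pp) rmorphXn /=.
  have e : ((val y)%:Z)%:~R = (val y)%:R :> 'F_p by [].
  by rewrite e natr_Zp.
by move=> H x; rewrite (eqmodF pp) rmorphXn /=; apply: H.
Qed.

Lemma exists_nonres {p} : prime p -> p != 2%N -> exists r : int, quad_nonresidue r p.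
Proof.
move=> pp p2; have [r Hr] := exists_nonsq pp p2.
exists (val r)%:Z; apply/(nonresF pp) => y /=.
have e : ((val r)%:Z)%:~R = (val r)%:R :> 'F_p by [].
by rewrite e natr_Zp.
Qed.

Lemma nonres_dvd {k n d} : (k %| n)%N -> quad_nonresidue d k -> quad_nonresidue d n.
Proof.
move=> kn H x; apply: contra (H x); rewrite !eqz_mod_dvd => D.
by apply: dvdz_trans D; rewrite dvdzE.
Qed.

Lemma nonres_congr (k : nat) (d d' : int) : (d = d' %[mod k])%Z -> quad_nonresidue d' k ->
  quad_nonresidue d k.
Proof. by move=> e H x; rewrite e; apply: H. Qed.

Lemma nonres_psq p (s : int) : prime p -> `|s|%N = p -> quad_nonresidue s (p ^ 2).
Proof.
move=> pp sp x; rewrite eqz_mod_dvd; apply/negP => D.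
have pD : (p%:Z %| s - x ^+ 2)%Z.
  by apply: dvdz_trans D; rewrite dvdzE /= -{1}(expn1 p) dvdn_exp2l.
have ps : (p%:Z %| s)%Z by rewrite dvdzE /= sp.
have px : (p%:Z %| x ^+ 2)%Z.
  by rewrite (_ : x ^+ 2 = s - (s - x ^+ 2)); [rewrite rpredB | ring].
move: px; rewrite dvdzE abszX /= Euclid_dvdX // andbT => px.
have p2x : ((p ^ 2)%N%:Z %| x ^+ 2)%Z by rewrite dvdzE abszX /= dvdn_exp2r.
have : ((p ^ 2)%N%:Z %| s)%Z.
  by rewrite (_ : s = (s - x ^+ 2) + x ^+ 2); [rewrite rpredD | ring].
rewrite dvdzE /= sp => /(dvdn_leq (prime_gt0 pp)) H.
by have := ltn_Pmull (prime_gt1 pp) (prime_gt0 pp); rewrite mulnn ltnNge H.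
Qed.

Theorem mainTheorem3 (n : nat) (hn : (3 <= n)%N) (hodd : odd n) :
  (composite n \/ n = 1 %[mod 4]) <->
  exists d : int, quad_nonresidue d n /\ quad_nonresidue (- d) n.
Proof.
have n2 : n != 2%N by apply/eqP => e; rewrite e in hodd.
have oddp : forall p, prime p -> (p %| n)%N -> p != 2%N.
  move=> p _ pn; apply/eqP => e; move: pn; rewrite e dvdn2 hodd //.
split.
  case: (boolP (prime n)) => pn.
    case => [[_ /negP]|n1]; first by rewrite pn.
    have n14 : (n %% 4 = 1)%N by rewrite n1.
    have [i hi] := sqrt_m1 pn n2 n14.
    have [r Hr] := exists_nonsq pn n2.
    have e : ((val r)%:Z)%:~R = (val r)%:R :> 'F_n by [].
    exists (val r)%:Z; split; apply/(nonresF pn) => y /=.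
      by rewrite e natr_Zp.
    rewrite rmorphN /= e natr_Zp; apply/eqP => E.
    move: (Hr (i * y)); rewrite exprMn hi mulN1r -E opprK eqxx //.
  move=> _.
  have n1 : (1 < n)%N by lia.
  set p := pdiv n.
  have pp : prime p := pdiv_prime n1.
  have pn' : (p %| n)%N := pdiv_dvd n.
  set m := (n %/ p)%N.
  have nm : n = (m * p)%N by rewrite /m divnK.
  case: (boolP (p %| m)%N) => pm.
    have pn2 : (p ^ 2 %| n)%N by rewrite nm -mulnn dvdn_mul.
    exists p%:Z; split; apply: (nonres_dvd pn2); apply: nonres_psq => //.
    by rewrite abszN.
  have m1 : (1 < m)%N.
    case: m nm pm => [|[|m]] //.
      by move=> e; move: hn; rewrite e.
    by move=> e; move: pn; rewrite e mul1n pp.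
  set q := pdiv m.
  have qp : prime q := pdiv_prime m1.
  have qm : (q %| m)%N := pdiv_dvd m.
  have qn : (q %| n)%N by rewrite nm dvdn_mulr.
  have co : coprimez p q.
    have cpq : coprime p q.
      rewrite prime_coprime // dvdn_prime2 //.
      by apply/eqP => e; move: pm; rewrite e qm.
    exact: cpq.
  have [r Hr] := exists_nonres pp (oddp p pp pn').
  have [s Hs] := exists_nonres qp (oddp q qp qn).
  exists (zchinese p q r (- s)); split.
    apply: (nonres_dvd pn'); apply: nonres_congr Hr.
    exact: zchinese_modl.
  apply: (nonres_dvd qn); apply: nonres_congr Hs.
  by rewrite -modzNm zchinese_modr // modzNm opprK.
move=> [d [Hd Hnd]].
case: (boolP (prime n)) => pn; last by left; split => //; lia.
right.
have : (n %% 2 = 1)%N by rewrite modn2 hodd.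
have [n14 | n34] : (n %% 4 = 1 \/ n %% 4 = 3)%N by lia.
  by move=> _; rewrite n14.
move=> _; exfalso.
have [[x hx] | [x hx]] := sq_cover pn n2 n34 (d%:~R).
  by move/(nonresF pn): Hd => /(_ x); rewrite hx eqxx.
by move/(nonresF pn): Hnd => /(_ x); rewrite rmorphN /= hx opprK eqxx.
Qed.
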